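(* Let $n\ge 2$ and $q>0$ be real. For all $A,B\in M_n(\mathbb{C})$ such that at least one of $A$ and $B$ is normal, $$\|AB-qBA\|_F^2\le (1+q^2)\,\|A\|_F^2\,\|B\|_F^2 ,$$ and the constant $1+q^2$ cannot be replaced by any smaller constant (the bound is attained).
   Context: $\|X\|_F=\sqrt{\operatorname{tr}(XX^\dagger)}$ denotes the Frobenius norm. *)

(* Defs.v *)
From HB Require Import structures.
From mathcomp Require Import all_boot all_order all_algebra.
From mathcomp Require Import spectral.
From mathcomp Require Export complex.
From mathcomp Require Export reals.
Set Implicit Arguments. Unset Strict Implicit. Unset Printing Implicit Defensive.
Import Order.TTheory GRing.Theory Num.Theory.
Local Open Scope ring_scope.
Local Open Scope sesquilinear_scope.

(* Frobenius norm ||X||_F = sqrt(tr(X X^dagger)); the trace is a nonnegative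
   real, we take its real part to land in R. *)
Definition frob (R : realType) (n : nat) (X : 'M[R[i]]_n) : R :=
  Num.sqrt (complex.Re (\tr (X *m X ^t*))).

(* Main.v *)
Require Import Defs.
From HB Require Import structures.
From mathcomp Require Import all_boot all_order all_algebra.
From mathcomp Require Import spectral complex reals ring.
Import Order.TTheory GRing.Theory Num.Theory.
Local Open Scope ring_scope.
Local Open Scope sesquilinear_scope.


Section Gen.
Context {C : numClosedFieldType}.

Definition fF {n} (X : 'M[C]_n) := \tr (X *m X ^t*).

Lemma fFE n (X : 'M[C]_n) :
  fF X = \sum_(i < n) \sum_(j < n) X i j * (X i j)^*.
Proof.
rewrite /fF /mxtrace; apply: eq_bigr => i _; rewrite mxE.
by apply: eq_bigr => j _; rewrite !mxE.
Qed.

Lemma fF_ge0 n (X : 'M[C]_n) : 0 <= fF X.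
Proof.
rewrite fFE; apply: sumr_ge0 => i _; apply: sumr_ge0 => j _.
exact: mul_conjC_ge0.
Qed.

Lemma fF_unitary n (P X : 'M[C]_n) : P \is unitarymx ->
  fF (P^t* *m X *m P) = fF X.
Proof.
move=> Pu; rewrite /fF !trmx_mul !map_mxM trmxCK.
have PP : P *m P^t* = 1%:M by apply/unitarymxP.
rewrite !mulmxA mulmxtVK //.
rewrite mxtrace_mulC !mulmxA PP mul1mx.
by [].
Qed.


Lemma key1 (q a b : C) : q^* = q -> 0 <= q ->
  (a - q * b) * (a - q * b)^* <= (1 + q ^+ 2) * (a * a^* + b * b^*).
Proof.
move=> qc q0; rewrite -subr_ge0.
have -> : (1 + q ^+ 2) * (a * a^* + b * b^*) - (a - q * b) * (a - q * b)^*
  = (q * a + b) * (q * a + b)^*.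
  by rewrite !rmorphB !rmorphD !rmorphM /= qc; ring.
exact: mul_conjC_ge0.
Qed.

Lemma key2 (q a : C) : q^* = q -> 0 <= q ->
  (a - q * a) * (a - q * a)^* <= (1 + q ^+ 2) * (a * a^*).
Proof.
move=> qc q0; rewrite -subr_ge0.
have -> : (1 + q ^+ 2) * (a * a^*) - (a - q * a) * (a - q * a)^*
  = (2%:R * q) * (a * a^*).
  by rewrite !rmorphB !rmorphM /= qc; ring.
by apply: mulr_ge0; [apply: mulr_ge0 | apply: mul_conjC_ge0].
Qed.

Lemma fF_diag n (d : 'rV[C]_n) :
  fF (diag_mx d) = \sum_(k < n) d 0 k * (d 0 k)^*.
Proof.
rewrite fFE; apply: eq_bigr => i _.
rewrite (bigD1 i) //= big1 ?addr0; first by rewrite !mxE eqxx !mulr1n.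
by move=> j ji; rewrite !mxE eq_sym (negbTE ji) mulr0n mul0r.
Qed.

Lemma diag_bound n (d : 'rV[C]_n) (B : 'M[C]_n) (q : C) : q^* = q -> 0 <= q ->
  fF (diag_mx d *m B - q *: (B *m diag_mx d))
    <= (1 + q ^+ 2) * fF (diag_mx d) * fF B.
Proof.
move=> qc q0.
set S := fF (diag_mx d).
have Sge0 : 0 <= S by apply: fF_ge0.
have q2 : 0 <= 1 + q ^+ 2 by apply: addr_ge0 => //; apply: exprn_ge0.
have bnd : forall i j : 'I_n,
    (d 0 i - q * d 0 j) * (d 0 i - q * d 0 j)^* <= (1 + q ^+ 2) * S.
  move=> i j; rewrite /S fF_diag (bigD1 i) //=.
  have [->|ji] := eqVneq j i.
    apply: (le_trans (key2 _ _ qc q0)); apply: ler_wpM2l => //.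
    rewrite lerDl; apply: sumr_ge0 => k _; exact: mul_conjC_ge0.
  rewrite (bigD1 j) //= addrA.
  apply: (le_trans (key1 _ _ _ qc q0)); apply: ler_wpM2l => //.
  rewrite lerDl; apply: sumr_ge0 => k _; exact: mul_conjC_ge0.
rewrite [fF (_ - _)]fFE [fF B]fFE mulr_sumr; apply: ler_sum => i _.
rewrite mulr_sumr; apply: ler_sum => j _.
rewrite mul_diag_mx mul_mx_diag !mxE.
have -> : d 0 i * B i j - q * (B i j * d 0 j) = (d 0 i - q * d 0 j) * B i j by ring.
rewrite rmorphM mulrACA; apply: ler_wpM2r; first exact: mul_conjC_ge0.
exact: bnd.
Qed.

Lemma normA_bound n (A B : 'M[C]_n) (q : C) : q^* = q -> 0 <= q ->
  A \is normalmx ->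
  fF (A *m B - q *: (B *m A)) <= (1 + q ^+ 2) * fF A * fF B.
Proof.
move=> qc q0 /orthomx_spectralP.
set P := spectralmx A; set d := spectral_diag A => eA.
have Pu : P \is unitarymx by apply: spectral_unitarymx.
rewrite invmx_unitary // in eA.
have PP : P *m P^t* = 1%:M by apply/unitarymxP.
have PtP : P^t* *m P = 1%:M by rewrite -[P^t*]mul1mx mulmxKtV.
set B' := P *m B *m P^t*.
have eB : B = P^t* *m B' *m P by rewrite /B' !mulmxA PtP mul1mx mulmxKtV.
have eM : A *m B - q *: (B *m A) =
   P^t* *m (diag_mx d *m B' - q *: (B' *m diag_mx d)) *m P.
  rewrite [in LHS]eA [in LHS]eB mulmxBr mulmxBl -scalemxAr -scalemxAl.
  congr (_ - q *: _); rewrite !mulmxA.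
    by rewrite ?PtP ?mul1mx ?mulmxKtV.
  by rewrite ?PtP ?mul1mx ?mulmxKtV.
rewrite eM fF_unitary // eA fF_unitary // eB fF_unitary //.
exact: diag_bound.
Qed.

Lemma fF_scale n (c : C) (X : 'M[C]_n) : fF (c *: X) = c * c^* * fF X.
Proof.
rewrite !fFE mulr_sumr; apply: eq_bigr => i _; rewrite mulr_sumr.
apply: eq_bigr => j _; rewrite !mxE rmorphM /=; ring.
Qed.

Lemma normB_bound n (A B : 'M[C]_n) (q : C) : q^* = q -> 0 < q ->
  B \is normalmx ->
  fF (A *m B - q *: (B *m A)) <= (1 + q ^+ 2) * fF A * fF B.
Proof.
move=> qc q0 Bn.
have qn0 : q != 0 by rewrite gt_eqF.
have qic : q^-1^* = q^-1 by rewrite fmorphV /= qc.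
have qi0 : 0 <= q^-1 by rewrite invr_ge0 ltW.
have -> : A *m B - q *: (B *m A) = (- q) *: (B *m A - q^-1 *: (A *m B)).
  by rewrite scalerBr scalerA mulNr mulfV // scaleN1r scaleNr opprK addrC.
rewrite fF_scale rmorphN /= qc.
apply: (le_trans (ler_wpM2l _ (normA_bound _ B A _ qic qi0 Bn))).
  by rewrite mulrNN mulr_ge0 // ltW.
have -> : - q * - q * ((1 + q^-1 ^+ 2) * fF B * fF A) =
          (q * q + q * q * q^-1 ^+ 2) * fF B * fF A by ring.
have -> : (q * q + q * q * q^-1 ^+ 2) * fF B * fF A =
   (1 + q ^+ 2) * fF A * fF B by field.
by [].
Qed.

Lemma fF_single n (X : 'M[C]_n) i0 j0 :
  (forall i j, (i != i0) || (j != j0) -> X i j = 0) ->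
  fF X = X i0 j0 * (X i0 j0)^*.
Proof.
move=> H; rewrite fFE (bigD1 i0) //= [X in _ + X]big1 => [|i ii0].
  rewrite (bigD1 j0) //= big1 ?addr0 ?addr0 // => j jj0.
  by rewrite H ?mul0r // jj0 orbT.
by rewrite big1 // => j _; rewrite H ?mul0r // ii0.
Qed.

Lemma diag_entry n (d : 'rV[C]_n) (B : 'M[C]_n) (q : C) i j :
  (diag_mx d *m B - q *: (B *m diag_mx d)) i j = (d 0 i - q * d 0 j) * B i j.
Proof. by rewrite mul_diag_mx mul_mx_diag !mxE; ring. Qed.

Lemma diag_normal n (d : 'rV[C]_n) : diag_mx d \is normalmx.
Proof.
apply/orthomx_spectral_subproof; exists (1%:M, d) => /=.
  by apply/unitarymxP; rewrite trmx1 map_mx1 mulmx1.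
by rewrite invmx1 mul1mx mulmx1.
Qed.

End Gen.


Section R.
Variable R : realType.

Lemma frob_fF n (X : 'M[R[i]]_n) : frob X = Num.sqrt (complex.Re (fF X)).
Proof. by []. Qed.

Lemma fF_real n (X : 'M[R[i]]_n) : fF X = ((complex.Re (fF X))%:C)%C.
Proof.
have h := fF_ge0 _ X; rewrite [LHS]complexE (ger0_Im h) /=.
by rewrite mulr0 addr0.
Qed.

Lemma Re_fF_ge0 n (X : 'M[R[i]]_n) : 0 <= complex.Re (fF X).
Proof. by have := fF_ge0 _ X; rewrite lecE => /andP[]. Qed.

Lemma frob2 n (X : 'M[R[i]]_n) : frob X ^+ 2 = complex.Re (fF X).
Proof. by rewrite frob_fF sqr_sqrtr // Re_fF_ge0. Qed.

Lemma bound_R n (q : R) (A B : 'M[R[i]]_n) : 0 < q ->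
  A \is normalmx \/ B \is normalmx ->
  frob (A *m B - (q%:C)%C *: (B *m A)) ^+ 2
    <= (1 + q ^+ 2) * frob A ^+ 2 * frob B ^+ 2.
Proof.
move=> q0 hAB.
have qC0 : 0 < (q%:C)%C by rewrite ltcE /= eqxx.
have qc : ((q%:C)%C)^* = (q%:C)%C by apply: geC0_conj; rewrite ltW.
have h : fF (A *m B - (q%:C)%C *: (B *m A))
   <= (1 + (q%:C)%C ^+ 2) * fF A * fF B.
  case: hAB => [hA|hB]; first exact: normA_bound qc (ltW qC0) hA.
  exact: normB_bound qc qC0 hB.
rewrite !frob2 -lecR !rmorphM rmorphD rmorph1 rmorphXn /= -!fF_real.
exact: h.
Qed.

Lemma example m (q : R) : 0 < q ->
  exists A B : 'M[R[i]]_m.+2, [/\ A \is normalmx, A != 0, B != 0 &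
    [/\ frob (A *m B - (q%:C)%C *: (B *m A)) ^+ 2 = (1 + q ^+ 2) ^+ 2,
    frob A ^+ 2 = 1 + q ^+ 2 & frob B ^+ 2 = 1]].
Proof.
move=> q0.
have neq : (ord0 : 'I_m.+2) != ord_max by [].
pose d : 'rV[R[i]]_m.+2 :=
  \row_k (if k == ord0 then 1 else if k == ord_max then - (q%:C)%C else 0).
pose B : 'M[R[i]]_m.+2 := delta_mx ord0 ord_max.
have d0 : d 0 ord0 = 1 by rewrite mxE eqxx.
have d1 : d 0 ord_max = - (q%:C)%C by rewrite mxE eq_sym (negbTE neq) eqxx.
have B1 : B ord0 ord_max = 1 by rewrite mxE !eqxx.
have Bz : forall i j, (i != ord0) || (j != ord_max) -> B i j = 0.
  by move=> i j; rewrite mxE; case/orP=> /negbTE->; rewrite ?andbF.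
exists (diag_mx d), B; split.
- exact: diag_normal.
- apply/negP=> /eqP/matrixP/(_ ord0 ord0); rewrite !mxE eqxx mulr1n.
  by move/eqP; rewrite oner_eq0.
- apply/negP=> /eqP/matrixP/(_ ord0 ord_max); rewrite B1 mxE.
  by move/eqP; rewrite oner_eq0.
split.
- rewrite frob2 (@fF_single _ _ _ ord0 ord_max); last first.
    by move=> i j h; rewrite diag_entry Bz ?mulr0.
  rewrite diag_entry d0 d1 B1 mulr1 mulrN opprK.
  have -> : 1 + (q%:C)%C * (q%:C)%C = ((1 + q ^+ 2)%:C)%C.
    by rewrite rmorphD rmorph1 rmorphXn expr2.
  rewrite geC0_conj ?ler0c ?addr_ge0 ?exprn_ge0 ?ltW //.
  by rewrite -rmorphM expr2.
- rewrite frob2 fF_diag (bigD1 ord0) //= (bigD1 ord_max) //= big1.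
    rewrite d0 d1 addr0 rmorph1 mulr1 rmorphN /= mulrNN.
    by rewrite !oppr0 mulr0 subr0 expr2.
  move=> k /andP[k0 k1]; rewrite mxE (negbTE k0) (negbTE k1) mul0r.
  by [].
- rewrite frob2 (@fF_single _ _ _ ord0 ord_max) // B1 rmorph1 mulr1.
  by [].
Qed.

End R.

Theorem proposition2 (R : realType) (n : nat) (q : R) :
  (2 <= n)%N -> 0 < q ->
  (forall A B : 'M[R[i]]_n, A \is normalmx \/ B \is normalmx ->
     frob (A *m B - (q%:C)%C *: (B *m A)) ^+ 2
       <= (1 + q ^+ 2) * frob A ^+ 2 * frob B ^+ 2)
  /\ (forall c : R,
        (forall A B : 'M[R[i]]_n, A \is normalmx \/ B \is normalmx ->
           frob (A *m B - (q%:C)%C *: (B *m A)) ^+ 2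
             <= c * frob A ^+ 2 * frob B ^+ 2) ->
        1 + q ^+ 2 <= c)
  /\ (exists A B : 'M[R[i]]_n, [/\ A \is normalmx \/ B \is normalmx,
        A != 0, B != 0 &
        frob (A *m B - (q%:C)%C *: (B *m A)) ^+ 2
          = (1 + q ^+ 2) * frob A ^+ 2 * frob B ^+ 2]).
Proof.
case: n => [|[|m]] // _ q0.
have p : 0 < 1 + q ^+ 2 by rewrite addr_gt0 ?ltr01 ?exprn_gt0.
have [A [B [An A0 B0 [eM eA eB]]]] := @example R m q q0.
split; [|split].
- by move=> A' B' h; apply: bound_R.
- move=> c hc; have := hc A B (or_introl An).
  by rewrite eM eA eB mulr1 expr2 ler_pM2r.
- exists A, B; split => //; first by left.
  by rewrite eM eA eB mulr1 expr2.
Qed.
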